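(* With the conventions $H^{(t)}_0(x)=1$ and $H^{(t)}_m(x)=0$ for $m<0$, for all $n\ge0$, \[ H^{(t)}_{n+1}(x)=x\,H^{(t)}_n(x)-\binom{n}{t}\frac{(t+1)!}{2}\,H^{(t)}_{n-t}(x). \]
   Context: Fix an integer $t\ge1$. A $t$-path in the complete graph $K_n$ (vertices $1,\dots,n$) is a subgraph isomorphic to a path with $t$ edges (on a given set of $t+1$ vertices there are $(t+1)!/2$ of them). The Hermite polynomial of order $t$ is $H^{(t)}_n(x)=\sum_F(-1)^{|F|}x^{\,n-(t+1)|F|}$, the sum over all families $F$ of pairwise vertex-disjoint $t$-paths in $K_n$. *)

(* Defs.v *)
From HB Require Import structures.
From mathcomp Require Import all_boot all_order all_algebra.
Set Implicit Arguments. Unset Strict Implicit. Unset Printing Implicit Defensive.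
Import GRing.Theory.
Local Open Scope ring_scope.

(* Vertices of K_n are 'I_n; an edge is a 2-subset of 'I_n; a subgraph (without
   isolated vertices) is given by its edge set E : {set {set 'I_n}}. *)

Definition is_tpath (t n : nat) (E : {set {set 'I_n}}) : bool :=
  [exists s : (t.+1).-tuple 'I_n,
     uniq s &&
     (E == [set [set tnth s (widen_ord (leqnSn t) i); tnth s (lift ord0 i)]
              | i : 'I_t])].

Definition vset (n : nat) (E : {set {set 'I_n}}) : {set 'I_n} :=
  \bigcup_(e in E) e.

Definition tpath_family (t n : nat) (F : {set {set {set 'I_n}}}) : bool :=
  [forall P in F, is_tpath t P] &&
  [forall P in F, forall Q in F, (P != Q) ==> [disjoint vset P & vset Q]].

Definition hermite (t n : nat) : {poly int} :=
  \sum_(F : {set {set {set 'I_n}}} | tpath_family t F)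
     (-1) ^+ #|F| * 'X^(n - t.+1 * #|F|).

(* Main.v *)
Require Import Defs.
From HB Require Import structures.
From mathcomp Require Import all_boot all_order all_algebra.
Import GRing.Theory.
Set Implicit Arguments. Unset Strict Implicit. Unset Printing Implicit Defensive.

Section Paths.
Variable T : finType.
Implicit Types (s : seq T) (x y : T).

Fixpoint pedges s : {set {set T}} :=
  match s with
  | x :: ((y :: _) as r) => [set x; y] |: pedges r
  | _ => set0
  end.

Definition vsetT (E : {set {set T}}) : {set T} := \bigcup_(e in E) e.

Definition deg (E : {set {set T}}) v := (\sum_(e in E) (v \in e))%N.

Lemma pedges_cons x y r : pedges [:: x, y & r] = [set x; y] |: pedges (y :: r).
Proof. by []. Qed.

Lemma pedges_sub s e : e \in pedges s -> {subset e <= s}.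
Proof.
elim: s => [|x [|y r] IH]; try by rewrite inE.
rewrite pedges_cons => /setU1P [-> z|/IH H z /H zi]; last by rewrite inE zi orbT.
by rewrite !inE => /orP[]/eqP->; rewrite eqxx ?orbT.
Qed.

Lemma pedges_notin x y r : x \notin y :: r -> [set x; y] \notin pedges (y :: r).
Proof.
move=> xn; apply/negP => /pedges_sub H; by move: xn; rewrite H // !inE eqxx.
Qed.

Lemma pedges0 s : (pedges s == set0) = (size s < 2).
Proof.
case: s => [|x [|y r]]; try by rewrite /= eqxx.
apply: negbTE; apply/set0Pn; exists [set x; y]; by rewrite pedges_cons setU11.
Qed.

Lemma vset_pedges s : 1 < size s -> vsetT (pedges s) = [set z in s].
Proof.
elim: s => [|x [|y r] IH] //= _.
rewrite /vsetT bigcup_setU big_set1; case: r IH => [|z r] IH.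
  by rewrite /= big_set0 setU0; apply/setP => w; rewrite !inE.
rewrite -pedges_cons; have:= IH isT; rewrite /vsetT => ->; apply/setP => w; rewrite !inE.
by case: (w == x); case: (w == y).
Qed.

Lemma deg_notin s v : v \notin s -> deg (pedges s) v = 0%N.
Proof.
move=> vn; rewrite /deg big1 // => e /pedges_sub H.
by case: (boolP (v \in e)) => // /H; rewrite (negbTE vn).
Qed.

Lemma deg_cons x y r v : x \notin y :: r ->
  deg (pedges [:: x, y & r]) v = ((v \in [set x; y]) + deg (pedges (y :: r)) v)%N.
Proof. by move=> xn; rewrite /deg pedges_cons big_setU1 //= pedges_notin. Qed.

Lemma deg_end x s v : uniq (x :: s) -> s != [::] ->
  (deg (pedges (x :: s)) v == 1%N) = (v == x) || (v == last x s).
Proof.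
elim: s x => [|y r IH] x //= /andP[xn ur] _.
rewrite deg_cons //; case: r IH ur xn => [|z r] IH ur xn.
  rewrite /deg /= big_set0 addn0 !inE; by case: (_ || _).
have IHy := IH y ur isT.
move: ur xn => /andP[yn _] xn.
have xn' : x \notin [:: y, z & r] := xn.
move: IHy; have [->|vx] := eqVneq v x => IHy.
  by rewrite deg_notin // set21.
move: IHy; have [->|vy] := eqVneq v y => IHy.
  rewrite /= in IHy; move/eqP: IHy => ->; rewrite set22 /=.
  apply: esym; apply: negbTE; apply: contra yn => /eqP ->; exact: mem_last.
by rewrite !inE (negbTE vx) (negbTE vy) /= IHy.
Qed.

Lemma pedges_rcons w s z :
  pedges (rcons (w :: s) z) = [set last w s; z] |: pedges (w :: s).
Proof.
elim: s w => [|y s IH] w; first by [].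
rewrite rcons_cons [rcons (y :: s) z]rcons_cons pedges_cons -rcons_cons IH /=.
by rewrite setUCA.
Qed.

Lemma pedges_rev s : pedges (rev s) = pedges s.
Proof.
elim: s => [|x [|y r] IH] //.
rewrite rev_cons pedges_cons -IH.
case E: (rev (y :: r)) => [|w u]; first by move/(congr1 size): E; rewrite size_rev.
rewrite pedges_rcons; congr (_ |: _); rewrite setUC; congr [set _; _].
have := congr1 rev E; rewrite revK (lastI w u) rev_rcons => -[->] _.
by [].
Qed.

Lemma pedges_headK x s s' : uniq (x :: s) -> uniq (x :: s') -> s != [::] ->
  pedges (x :: s') = pedges (x :: s) -> s' = s.
Proof.
elim: s x s' => [|y r IH] x s' // ux ux' _.
case: s' ux' => [|y' r'] ux' E.
  by move: (pedges0 [:: x, y & r]); rewrite -E /= eqxx.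
have xn : x \notin y :: r by case/andP: ux.
have yy : y' = y.
  have : [set x; y'] \in pedges [:: x, y & r] by rewrite -E pedges_cons setU11.
  rewrite pedges_cons => /setU1P [/setP/(_ y')|/pedges_sub/(_ x)].
    rewrite set22 !inE; case/andP: ux' => /= xn' _.
    have yx : y' != x by apply: contraNneq xn' => ->; rewrite inE eqxx.
    by rewrite (negbTE yx) /= => /esym/eqP.
  by move=> H; have := H (set21 _ _); rewrite (negbTE xn).
subst y'.
have E' : pedges (y :: r') = pedges (y :: r).
  rewrite -(setU1K (pedges_notin xn)) -pedges_cons -E pedges_cons setU1K //.
  by apply: pedges_notin; case/andP: ux'.
case: r IH ux E E' xn => [|z r] IH ux E E' xn.
  by move: (pedges0 (y :: r')); rewrite E' /= eqxx; case: (r') => //.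
have u1 : uniq [:: y, z & r] by case/andP: ux.
have u2 : uniq (y :: r') by case/andP: ux'.
by congr (_ :: _); apply: (IH y).
Qed.

Lemma pedges_uniq s s' : uniq s -> uniq s' -> 1 < size s ->
  pedges s' = pedges s -> s' = s \/ s' = rev s.
Proof.
case: s => [|x s1] // us us' hs E.
have s1n : s1 != [::] by case: s1 hs {us E}.
case: s' us' E => [|x' s1'] us' E.
  by move: (pedges0 (x :: s1)); rewrite -E /= eqxx ltnNge hs.
have s1n' : s1' != [::].
  by case: s1' {us'} E => // E; move: (pedges0 (x :: s1)); rewrite -E /= eqxx ltnNge hs.
have := @deg_end x' s1' x' us' s1n'; rewrite eqxx orTb E deg_end // => /orP[/eqP ex|/eqP el].
  by left; subst x'; rewrite (pedges_headK us us' s1n E).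
right; move: us E; rewrite (lastI x s1) rev_rcons -el -(rev_uniq (rcons _ _)) rev_rcons => us E.
have nn : rev (belast x s1) != [::] by rewrite -size_eq0 size_rev size_belast size_eq0.
rewrite (pedges_headK us us' nn) // E -pedges_rev rev_rcons.
by [].
Qed.
End Paths.

Section Count.
Variable T : finType.
Variable t : nat.
Hypothesis ht : (1 <= t)%N.

Definition is_tpathT (E : {set {set T}}) : bool :=
  [exists s : (t.+1).-tuple T, uniq s && (E == pedges s)].

Lemma tpathP E : is_tpathT E -> exists2 s : (t.+1).-tuple T, uniq s & E = pedges s.
Proof. by case/existsP => s /andP[us /eqP ->]; exists s. Qed.

Lemma size_tup (s : (t.+1).-tuple T) : 1 < size s.
Proof. by rewrite size_tuple ltnS. Qed.

Lemma tpath_card E : is_tpathT E -> #|vsetT E| = t.+1.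
Proof.
case/tpathP => s us ->; rewrite vset_pedges ?size_tup // cardsE.
by move/card_uniqP: us => ->; rewrite size_tuple.
Qed.

Lemma tpath_n0 E : is_tpathT E -> vsetT E != set0.
Proof. by move/tpath_card => h; rewrite -card_gt0 h. Qed.

Lemma tup_neq_rev (s : (t.+1).-tuple T) : uniq s -> s != rev_tuple s.
Proof.
move=> us; apply/negP => /eqP /(congr1 val) /=.
have := size_tup s; case: (val s) us => [|x [|y r]] //= us _.
rewrite rev_cons (lastI y r) rev_rcons /= => -[E] _.
by move: us; rewrite E mem_last.
Qed.

Lemma ffact_diff m : ((m.+1) ^_ t.+1 - m ^_ t.+1 = t.+1 * m ^_ t)%N.
Proof.
rewrite ffactnS /= ffactnSr.
case: (leqP t m) => tm.
  rewrite [(m.+1 * _)%N]mulnC -mulnBr mulnC; congr (_ * _)%N.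
  by rewrite subSn ?leq_subr // subKn.
by rewrite ffact_small // !muln0.
Qed.

Lemma allD1 (A : {set T}) a (r : seq T) :
  all (mem (A :\ a)) r = all (mem A) r && (a \notin r).
Proof.
elim: r => [|x r IH] //=; rewrite IH !inE negb_or.
by rewrite [x == a]eq_sym; case: (a == x); case: (x \in A); rewrite ?andbF.
Qed.

Lemma count_paths (A : {set T}) a m : a \in A -> #|A| = m.+1 ->
  #|[set P | is_tpathT P && (vsetT P \subset A) && (a \in vsetT P)]| =
  ('C(m, t) * ((t.+1)`! %/ 2))%N.
Proof.
move=> aA cA.
set PS := [set P | _].
pose U (B : {set T}) := [set s : (t.+1).-tuple T | all (mem B) s & uniq s].
have cU B : #|U B| = (#|B| ^_ t.+1)%N by rewrite card_uniq_tuples.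
pose S := U A :\: U (A :\ a).
have cS : #|S| = (t.+1 * m ^_ t)%N.
  have cA' : #|A :\ a| = m by move: cA; rewrite (cardsD1 a) aA => -[].
  rewrite cardsD (setIidPr _); first by rewrite !cU cA cA' ffact_diff.
  apply/subsetP => s; rewrite !inE => /andP[al ->]; rewrite andbT.
  by apply/allP => x /(allP al); rewrite !inE => /andP[].
have inS s : (s \in S) = [&& all (mem A) s, uniq s & a \in s].
  have allD := allD1 A a s.
  by rewrite !inE allD; case: (all _ _); case: (uniq s); case: (a \in s).
clearbody S.
have vP (u : (t.+1).-tuple T) : vsetT (pedges u) = [set z in u] := vset_pedges (size_tup u).
have subA (u : (t.+1).-tuple T) : (vsetT (pedges u) \subset A) = all (mem A) u.
  rewrite vP; apply/subsetP/allP => H x; first by move=> xs; apply: H; rewrite inE.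
  by rewrite inE => /H.
have key : #|S| = (#|PS| * 2)%N.
  have := @partition_big nat 0%N addn _ (index_enum ((t.+1).-tuple T)) _ (fun s => s \in S) (fun s => pedges s) (fun P => P \in PS) (fun _ => 1%N).
  rewrite sum1_card => ->; last first.
    move=> u; rewrite inS => /and3P[As us aS]; rewrite !inE subA As vP inE aS !andbT.
    by apply/existsP; exists u; rewrite us eqxx.
  rewrite -sum_nat_const; apply: eq_bigr => P PP.
  rewrite sum1dep_card.
  move: PP; rewrite inE => /andP[/andP[/tpathP[s0 us0 E0] PA] Pa].
  have -> : [set s | (s \in S) && (pedges s == P)] = [set s0; rev_tuple s0].
    apply/setP => u; rewrite !inE; apply/idP/idP.
      case/andP; rewrite inS => /and3P[_ us _] /eqP E.
      have := pedges_uniq us0 us (size_tup s0) (etrans E E0).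
      by case=> H; apply/orP; [left|right]; apply/eqP/val_inj.
    have Hs0 : s0 \in S.
      have aS : a \in s0 by move: Pa; rewrite E0 vP inE.
      by rewrite inS us0 aS -subA -E0 PA.
    case/orP => /eqP ->; first by rewrite Hs0 E0 eqxx.
    move: Hs0; rewrite !inS /= all_rev rev_uniq mem_rev => ->.
    by rewrite E0 pedges_rev eqxx.
  by rewrite cards2 tup_neq_rev.
have d2 : (2 %| (t.+1)`!)%N by apply: dvdn_fact; rewrite /= ltnS ht.
apply/eqP; rewrite -(eqn_pmul2r (isT : (0 < 2)%N)) -key cS -mulnA divnK //.
by rewrite -bin_ffact factS mulnCA mulnA.
Qed.

Definition famT (F : {set {set {set T}}}) :=
  [forall P in F, is_tpathT P] &&
  [forall P in F, forall Q in F, (P != Q) ==> [disjoint vsetT P & vsetT Q]].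

Definition famin (A : {set T}) F := famT F && [forall P in F, vsetT P \subset A].

Lemma faminP (A : {set T}) (F : {set {set {set T}}}) : reflect
  ({in F, forall P, is_tpathT P && (vsetT P \subset A)} /\
   {in F &, forall P Q, P != Q -> [disjoint vsetT P & vsetT Q]}) (famin A F).
Proof.
apply: (iffP idP).
  case/andP => /andP[/forall_inP H1 /forall_inP H2] /forall_inP H3; split.
    by move=> P PF; rewrite H1 // H3.
  by move=> P Q PF QF; move: (H2 P PF) => /forall_inP/(_ Q QF)/implyP.
case=> H1 H2; apply/andP; split; first (apply/andP; split).
- by apply/forall_inP => P /H1 /andP[].
- by apply/forall_inP => P PF; apply/forall_inP => Q QF; apply/implyP; apply: H2.
- by apply/forall_inP => P /H1 /andP[].
Qed.

Lemma fam_bound (B : {set T}) F : famin B F -> (t.+1 * #|F| <= #|B|)%N.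
Proof.
case/faminP => H1 H2.
have inj : {in F &, injective (@vsetT T)}.
  move=> P Q PF QF E; apply/eqP; apply: contraT => nPQ.
  have := H2 P Q PF QF nPQ; rewrite -E -setI_eq0 setIid.
  by have := H1 P PF => /andP[/tpath_n0 /negbTE ->].
have tI : trivIset (@vsetT T @: F).
  apply/trivIsetP => X Y /imsetP[P PF ->] /imsetP[Q QF ->] nXY.
  by apply: H2 => //; apply: contraNneq nXY => ->.
have cov : cover (@vsetT T @: F) \subset B.
  by apply/bigcupsP => X /imsetP[P PF ->]; have /andP[] := H1 P PF.
apply: leq_trans (subset_leq_card cov).
move: tI; rewrite /trivIset => /eqP <-.
rewrite (eq_bigr (fun _ => t.+1)); last first.
  by move=> X /imsetP[P PF ->]; have /andP[/tpath_card ->] := H1 P PF.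
by rewrite sum_nat_const card_in_imset // mulnC.
Qed.


Local Open Scope ring_scope.

Definition hA (A : {set T}) : {poly int} :=
  \sum_(F : {set {set {set T}}} | famin A F)
     (-1) ^+ #|F| * 'X^(#|A| - t.+1 * #|F|).

Lemma hA0 (A : {set T}) : #|A| = 0%N -> hA A = 1.
Proof.
move/cards0_eq => ->; rewrite /hA (big_pred1 set0) ?cards0 ?expr0 ?mulr1 //.
move=> F; rewrite /=; apply/idP/idP.
  case/faminP => H1 _; apply/eqP/setP => P; rewrite inE; apply/negP => PF.
  have /andP[/tpath_n0 n0 sub0] := H1 P PF.
  by move: n0; rewrite -subset0 sub0.
move/eqP ->; apply/faminP; split; by move=> P; rewrite inE.
Qed.


Definition PA (A : {set T}) a (P : {set {set T}}) :=
  is_tpathT P && (vsetT P \subset A) && (a \in vsetT P).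

Lemma part1 (A : {set T}) a F : a \in A ->
  (famin A F && ~~ [exists P in F, a \in vsetT P]) = famin (A :\ a) F.
Proof.
move=> aA; apply/idP/idP.
  case/andP => /faminP[H1 H2]; rewrite negb_exists_in => /forall_inP H3.
  apply/faminP; split => // P PF.
  by have /andP[-> s] := H1 P PF; rewrite subsetD1 s H3.
case/faminP => H1 H2; apply/andP; split.
  apply/faminP; split => // P PF; have /andP[-> s] := H1 P PF.
  by move: s; rewrite subsetD1 => /andP[].
rewrite negb_exists_in; apply/forall_inP => P PF; have /andP[_ s] := H1 P PF.
by move: s; rewrite subsetD1 => /andP[].
Qed.

Lemma part2 (A : {set T}) a P F : PA A a P ->
  ((famin A (P |: F) && [exists Q in P |: F, a \in vsetT Q])
    && ((P \in P |: F) && (a \in vsetT P))) && ((P |: F) :\ P == F)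
  = famin (A :\: vsetT P) F.
Proof.
case/andP => /andP[tP sP] aP; apply/idP/idP.
  case/andP => /andP[/andP[/faminP[H1 H2] _] _] /eqP E.
  have PF : P \notin F by rewrite -E setD11.
  apply/faminP; split.
    move=> Q QF; have /andP[-> sQ] := H1 Q (setU1r _ QF).
    rewrite subsetD sQ /=; apply: (H2 Q P (setU1r _ QF) (setU11 _ _)).
    by apply/eqP => QP; move: PF; rewrite -QP QF.
  by move=> Q R QF RF; apply: H2; apply: setU1r.
case/faminP => H1 H2.
have PF : P \notin F.
  apply/negP => PF; have /andP[_] := H1 P PF.
  by move/subsetP/(_ a aP); rewrite inE aP.
rewrite setU11 aP setU1K // eqxx !andbT; apply/andP; split; last first.
  by apply/existsP; exists P; rewrite setU11 aP.
have sub Q : Q \in F -> vsetT Q \subset A.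
  by move=> QF; have /andP[_] := H1 Q QF; rewrite subsetD => /andP[].
have dis Q : Q \in F -> [disjoint vsetT Q & vsetT P].
  by move=> QF; have /andP[_] := H1 Q QF; rewrite subsetD => /andP[].
apply/faminP; split.
  move=> Q /setU1P[->|QF]; first by rewrite tP sP.
  by have /andP[-> _] := H1 Q QF; rewrite sub.
move=> Q R /setU1P[->|QF] /setU1P[->|RF] QR.
- by rewrite eqxx in QR.
- by rewrite disjoint_sym dis.
- by rewrite dis.
- exact: H2.
Qed.


Lemma hA_rec (A : {set T}) a : a \in A ->
  hA A = 'X * hA (A :\ a) - \sum_(P | PA A a P) hA (A :\: vsetT P).
Proof.
move=> aA.
rewrite {1}/hA (bigID (fun F : {set {set {set T}}} => [exists P in F, a \in vsetT P])) /= addrC.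
congr (_ + _).
  rewrite big_distrr /=; apply: eq_big => F; first by rewrite part1.
  move=> FA; have FA' : famin (A :\ a) F by rewrite -part1.
  have b := fam_bound FA'.
  by rewrite (cardsD1 a A) aA add1n subSn // exprS mulrCA.
rewrite -sumrN.
rewrite (eq_bigr (fun F : {set {set {set T}}} => \sum_(P : {set {set T}} | (P \in F) && (a \in vsetT P))
      ((-1) ^+ #|F| * 'X^(#|A| - t.+1 * #|F|)))); last first.
  move=> F /andP[FA /exists_inP[P0 P0F aP0]].
  rewrite (big_pred1 P0) // => P /=.
  case/faminP: FA => _ H2.
  apply/andP/eqP => [[PF aP]|->]; last by [].
  apply/eqP; apply: contraT => nPP0; have := H2 P P0 PF P0F nPP0.
  by rewrite -setI_eq0 => /eqP/setP/(_ a); rewrite !inE aP aP0.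
rewrite (exchange_big_dep (PA A a)) /=; last first.
  move=> F P /andP[/faminP[H1 _] _] /andP[PF aP].
  by have /andP[tP sP] := H1 P PF; rewrite /PA tP sP aP.
apply: eq_bigr => P HP.
rewrite -sumrN (reindex_onto (fun F' => P |: F') (fun F => F :\ P)) /=; last first.
  by move=> F /andP[_ /andP[PF _]]; rewrite setD1K.
apply: eq_big => F'; first exact: part2.
move=> /andP[_ /eqP E]; have PF : P \notin F' by rewrite -E setD11.
move: HP => /andP[/andP[tP sP] aP].
rewrite cardsU1 PF add1n exprS mulN1r mulNr; congr (- _).
by rewrite mulnS subnDA cardsD (setIidPr sP) tpath_card.
Qed.

End Count.

Local Open Scope ring_scope.

Lemma hA_card (t : nat) (ht : (1 <= t)%N) m :
  forall (T : finType) (A : {set T}), #|A| = m -> hA t A = hA t [set: 'I_m].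
Proof.
elim/ltn_ind: m => m IH T A cA.
case: m IH cA => [|k] IH cA.
  by rewrite !hA0 // cardsT card_ord.
have step (U : finType) (B : {set U}) : #|B| = k.+1 ->
    hA t B = 'X * hA t [set: 'I_k]
             - (('C(k, t) * ((t.+1)`! %/ 2))%N)%:R * hA t [set: 'I_(k - t)].
  move=> cB.
  have /set0Pn[b bB] : B != set0 by rewrite -card_gt0 cB.
  rewrite (hA_rec ht bB).
  have cB' : #|B :\ b| = k by move: cB; rewrite (cardsD1 b) bB => -[].
  rewrite (IH k) //; congr (_ - _).
  rewrite (eq_bigr (fun _ => hA t [set: 'I_(k - t)])); last first.
    move=> P /andP[/andP[tP sP] _]; apply: IH; first by rewrite ltnS leq_subr.
    by rewrite cardsD (setIidPr sP) (tpath_card ht tP) cB subSS.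
  rewrite sumr_const [RHS]mulr_natl; congr (_ *+ _).
  rewrite -(count_paths ht bB cB); apply: eq_card => P.
  by rewrite inE.
by rewrite step // [RHS]step // cardsT card_ord.
Qed.


Lemma hA_step (t : nat) (ht : (1 <= t)%N) k (U : finType) (B : {set U}) : #|B| = k.+1 ->
    hA t B = 'X * hA t [set: 'I_k]
             - (('C(k, t) * ((t.+1)`! %/ 2))%N)%:R * hA t [set: 'I_(k - t)].
Proof.
  move=> cB.
have /set0Pn[b bB] : B != set0 by rewrite -card_gt0 cB.
rewrite (hA_rec ht bB).
have cB' : #|B :\ b| = k by move: cB; rewrite (cardsD1 b) bB => -[].
rewrite (hA_card ht cB'); congr (_ - _).
rewrite (eq_bigr (fun _ => hA t [set: 'I_(k - t)])); last first.
  move=> P /andP[/andP[tP sP] _]; apply: hA_card => //.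
  by rewrite cardsD (setIidPr sP) (tpath_card ht tP) cB subSS.
rewrite sumr_const [RHS]mulr_natl; congr (_ *+ _).
rewrite -(count_paths ht bB cB); apply: eq_card => P.
by rewrite inE.
Qed.

Lemma imset_recl (U : finType) k (f : 'I_k.+1 -> U) :
  [set f i | i : 'I_k.+1] = f ord0 |: [set f (lift ord0 i) | i : 'I_k].
Proof.
apply/setP => e; apply/imsetP/setU1P.
  case=> i _ ->; case: (unliftP ord0 i) => [j ->|->]; last by left.
  by right; apply/imsetP; exists j.
by case=> [->|/imsetP[j _ ->]]; [exists ord0 | exists (lift ord0 j)].
Qed.

Lemma imset_pedges (U : finType) k (s : k.+1.-tuple U) :
  [set [set tnth s (widen_ord (leqnSn k) i); tnth s (lift ord0 i)] | i : 'I_k]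
  = pedges s.
Proof.
elim: k s => [|k IH] s.
  case/tupleP: s => x s; rewrite tuple0 /=; apply/setP => e; rewrite inE.
  by apply/negP => /imsetP[[]].
case/tupleP: s => x s; rewrite imset_recl.
case/tupleP: s IH => y s IH.
have -> : pedges [tuple of x :: [tuple of y :: s]] = [set x; y] |: pedges [tuple of y :: s] by [].
rewrite -(IH [tuple of y :: s]); congr (_ |: _).
apply: eq_imset => j; rewrite !(tnth_nth x) /=.
by congr [set _; _]; rewrite lift0.
Qed.

Lemma hermite_hA t n : hermite t n = hA t [set: 'I_n].
Proof.
rewrite /hermite /hA cardsT card_ord; apply: eq_bigl => F.
rewrite /tpath_family /famin /famT.
have -> : [forall P in F, vsetT P \subset [set: 'I_n]] = true.
  by apply/forall_inP => P _; apply: subsetT.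
rewrite andbT; congr (_ && _); apply: eq_forallb => P.
rewrite /is_tpath /is_tpathT; congr (_ ==> _); apply: eq_existsb => s.
by rewrite imset_pedges.
Qed.

Theorem mainTheorem11 (t n : nat) (ht : (1 <= t)%N) :
  hermite t n.+1 =
    'X * hermite t n
    - (('C(n, t) * ((t.+1)`! %/ 2))%N)%:R
      * (if (t <= n)%N then hermite t (n - t) else 0).
Proof.
rewrite !hermite_hA (@hA_step t ht n _ [set: 'I_n.+1]) ?cardsT ?card_ord //.
case: leqP => tn //.
by rewrite bin_small // mul0n mulr0 mul0r.
Qed.
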